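(* The hyperbolic plane $\mathbb H^2$ (with its geodesic segments) is drop complete, whereas its vertical extension $\mathbb H^2\times\mathbb R$ (with the product Riemannian metric and its geodesic segments) is not drop complete.
   Context: $\mathbb H^2$ denotes the hyperbolic plane, the complete simply connected Riemannian surface of constant curvature $-1$. In a space where any two points $a,b$ are joined by a unique geodesic segment $[a,b]$, a set $K$ is convex if $[a,b]\subseteq K$ for all $a,b\in K$; $\operatorname{conv}(H)$ is the intersection of all convex sets containing $H$; and the space is drop complete if for every convex set $K$ and every point $x_0$, $\operatorname{conv}(\{x_0\}\cup K)=\bigcup\{[x_0,x]\mid x\in K\}$. The vertical extension $\mathbb H^2\times\mathbb R$ carries the product metric; its geodesic segment from $(x_0,y_0)$ to $(x_1,y_1)$ is $t\mapsto(c(t),(1-t)y_0+ty_1)$, $t\in[0,1]$, where $c$ is the constant-speed geodesic of $\mathbb H^2$ from $x_0$ to $x_1$. *)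

(* Defs.v *)
From Stdlib Require Import Reals.
Open Scope R_scope.

(** * Abstract framework: a space with a carrier predicate [M] on an
    ambient type [X] and a geodesic map [g a b t] (t in [0,1]) giving the
    constant-speed geodesic from a to b. *)
Section Framework.
Variable X : Type.

Definition seg (g : X -> X -> R -> X) (a b : X) (x : X) : Prop :=
  exists t, 0 <= t <= 1 /\ x = g a b t.

Definition convex (M : X -> Prop) (g : X -> X -> R -> X) (K : X -> Prop) : Prop :=
  (forall x, K x -> M x) /\
  (forall a b x, K a -> K b -> seg g a b x -> K x).

Definition conv (M : X -> Prop) (g : X -> X -> R -> X) (H : X -> Prop) (x : X) : Prop :=
  forall K, convex M g K -> (forall h, H h -> K h) -> K x.

Definition drop_complete (M : X -> Prop) (g : X -> X -> R -> X) : Prop :=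
  forall (K : X -> Prop) (x0 : X),
    convex M g K -> (exists k, K k) -> M x0 ->
    forall x, conv M g (fun y => y = x0 \/ K y) x <->
              exists y, K y /\ seg g x0 y x.
End Framework.

Arguments seg {X}. Arguments convex {X}. Arguments conv {X}.
Arguments drop_complete {X}.

Definition pt3 := (R * R * R)%type.

Definition H2 (p : pt3) : Prop :=
  let '(x, y, z) := p in z * z - x * x - y * y = 1 /\ 0 < z.

(** Lorentzian (Minkowski) bilinear form, sign chosen so that
    lor p p = 1 on H2 and cosh (dist p q) = lor p q. *)
Definition lor (p q : pt3) : R :=
  let '(x1, y1, z1) := p in let '(x2, y2, z2) := q in
  z1 * z2 - x1 * x2 - y1 * y2.

Definition arcosh (a : R) : R := ln (a + sqrt (a * a - 1)).

Definition hdist (p q : pt3) : R := arcosh (lor p q).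

Definition lincomb (a : R) (p : pt3) (b : R) (q : pt3) : pt3 :=
  let '(x1, y1, z1) := p in let '(x2, y2, z2) := q in
  (a * x1 + b * x2, a * y1 + b * y2, a * z1 + b * z2).

Definition geodH2 (p q : pt3) (t : R) : pt3 :=
  let d := hdist p q in
  if Req_EM_T d 0 then p
  else lincomb (sinh ((1 - t) * d) / sinh d) p (sinh (t * d) / sinh d) q.

Definition H2R (P : pt3 * R) : Prop := H2 (fst P).

Definition geodH2R (P Q : pt3 * R) (t : R) : pt3 * R :=
  (geodH2 (fst P) (fst Q) t, (1 - t) * snd P + t * snd Q).

(* Main.v *)
Require Import Defs.
From Stdlib Require Import Reals Lra Psatz.
Open Scope R_scope.

Lemma lor_ge1 p q : H2 p -> H2 q -> 1 <= lor p q.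
Proof.
  destruct p as [[x1 y1] z1], q as [[x2 y2] z2]; simpl; intros [h1 p1] [h2 p2].
  set (u := 1 + x1*x2 + y1*y2).
  assert (E : (z1*z2)*(z1*z2) = u*u + (x1-x2)*(x1-x2) + (y1-y2)*(y1-y2) + (x1*y2-x2*y1)*(x1*y2-x2*y1)).
  { unfold u. replace (z1*z2*(z1*z2)) with ((z1*z1)*(z2*z2)) by ring.
    replace (z1*z1) with (1+x1*x1+y1*y1) by lra. replace (z2*z2) with (1+x2*x2+y2*y2) by lra. ring. }
  assert (z1*z2 > 0) by nra.
  assert (u <= z1*z2).
  { destruct (Rle_or_lt u (z1*z2)) as [h|h]; [exact h|].
    assert (z1*z2*(z1*z2) < u*u) by (apply Rmult_le_0_lt_compat; lra).
    assert (0 <= (x1-x2)*(x1-x2)) by apply Rle_0_sqr.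
    assert (0 <= (y1-y2)*(y1-y2)) by apply Rle_0_sqr.
    assert (0 <= (x1*y2-x2*y1)*(x1*y2-x2*y1)) by apply Rle_0_sqr. lra. }
  unfold u in *; lra.
Qed.

Lemma lor_eq1 p q : H2 p -> H2 q -> lor p q = 1 -> p = q.
Proof.
  destruct p as [[x1 y1] z1], q as [[x2 y2] z2]; simpl; intros [h1 p1] [h2 p2] e.
  set (u := 1 + x1*x2 + y1*y2).
  assert (E : (z1*z2)*(z1*z2) = u*u + (x1-x2)*(x1-x2) + (y1-y2)*(y1-y2) + (x1*y2-x2*y1)*(x1*y2-x2*y1)).
  { unfold u. replace (z1*z2*(z1*z2)) with ((z1*z1)*(z2*z2)) by ring.
    replace (z1*z1) with (1+x1*x1+y1*y1) by lra. replace (z2*z2) with (1+x2*x2+y2*y2) by lra. ring. }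
  assert (U : u = z1*z2) by (unfold u; lra).
  rewrite U in E.
  assert (0 <= (x1-x2)*(x1-x2)) by apply Rle_0_sqr.
  assert (0 <= (y1-y2)*(y1-y2)) by apply Rle_0_sqr.
  assert (0 <= (x1*y2-x2*y1)*(x1*y2-x2*y1)) by apply Rle_0_sqr.
  assert (A : (x1-x2)*(x1-x2) = 0) by lra.
  assert (B : (y1-y2)*(y1-y2) = 0) by lra.
  apply Rmult_integral in A; apply Rmult_integral in B.
  assert (x1 = x2) by (destruct A; lra). assert (y1 = y2) by (destruct B; lra). subst.
  assert (Hz : (z1-z2)*(z1+z2) = 0) by nra.
  apply Rmult_integral in Hz. assert (z1 = z2) by (destruct Hz; lra). subst. reflexivity.
Qed.

Lemma lor_lin a p b q u : lor u (lincomb a p b q) = a * lor u p + b * lor u q.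
Proof. destruct p as [[? ?] ?], q as [[? ?] ?], u as [[? ?] ?]; simpl; ring. Qed.

Lemma lor_sym p q : lor p q = lor q p.
Proof. destruct p as [[? ?] ?], q as [[? ?] ?]; simpl; ring. Qed.

Lemma lor_linl a p b q u : lor (lincomb a p b q) u = a * lor p u + b * lor q u.
Proof. destruct p as [[? ?] ?], q as [[? ?] ?], u as [[? ?] ?]; simpl; ring. Qed.

Lemma lor_self p : H2 p -> lor p p = 1.
Proof. destruct p as [[? ?] ?]; simpl; intros [h _]; lra. Qed.

Lemma lor_comb a p b q : H2 p -> H2 q ->
  lor (lincomb a p b q) (lincomb a p b q) = a*a + b*b + 2*a*b*lor p q.
Proof.
  intros hp hq. rewrite lor_lin, !lor_linl, !lor_self by assumption.
  rewrite (lor_sym q p). ring.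
Qed.

Lemma H2_comb a p b q : H2 p -> H2 q -> 0 <= a -> 0 <= b ->
  a*a + b*b + 2*a*b*lor p q = 1 -> H2 (lincomb a p b q).
Proof.
  intros hp hq ha hb e.
  assert (L : lor (lincomb a p b q) (lincomb a p b q) = 1) by (rewrite lor_comb; auto).
  revert L. destruct p as [[x1 y1] z1], q as [[x2 y2] z2]; simpl in *.
  destruct hp as [_ p1], hq as [_ p2]. intro L. split. lra.
  destruct (Req_dec a 0) as [->|na].
  - assert (b <> 0) by (intro; subst; lra). nra.
  - nra.
Qed.

Lemma sinh_id A B : sinh A * sinh A + sinh B * sinh B + 2 * sinh A * sinh B * cosh (A + B)
  = sinh (A + B) * sinh (A + B).
Proof.
  unfold sinh, cosh. rewrite Ropp_plus_distr, !exp_plus, !exp_Ropp.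
  assert (exp A > 0) by apply exp_pos. assert (exp B > 0) by apply exp_pos.
  field. split; lra.
Qed.

Lemma sinh_pos x : 0 < x -> 0 < sinh x.
Proof. intro h. rewrite <- sinh_0. apply sinh_lt; exact h. Qed.

Lemma sinh_nonneg x : 0 <= x -> 0 <= sinh x.
Proof. intro h. destruct h as [h| <-]. left; apply sinh_pos; auto. rewrite sinh_0; lra. Qed.

Section HD.
Variable c : R.
Hypothesis hc : 1 <= c.
Let s := sqrt (c*c - 1).
Lemma s_nonneg : 0 <= s. Proof. apply sqrt_pos. Qed.
Lemma s_sq : s * s = c*c - 1. Proof. apply sqrt_sqrt. nra. Qed.
Lemma exp_arc : exp (arcosh c) = c + s.
Proof. unfold arcosh. apply exp_ln. pose proof s_nonneg. fold s. lra. Qed.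
Lemma arc_nonneg : 0 <= arcosh c.
Proof.
  destruct (Rle_or_lt 0 (arcosh c)) as [h|h]; auto.
  apply exp_increasing in h. rewrite exp_0, exp_arc in h. pose proof s_nonneg. lra.
Qed.
Lemma arc_zero : arcosh c = 0 -> c = 1.
Proof. intro h. pose proof exp_arc as e. rewrite h, exp_0 in e. pose proof s_nonneg. lra. Qed.
Lemma cosh_arc : cosh (arcosh c) = c.
Proof.
  unfold cosh. rewrite exp_Ropp, exp_arc. pose proof s_nonneg. pose proof s_sq.
  assert (/ (c + s) = c - s).
  { assert ((c+s)*(c-s) = 1) by (ring_simplify; lra).
    apply (Rmult_eq_reg_l (c+s)). rewrite Rinv_r by lra. lra. lra. }
  rewrite H1. field.
Qed.
End HD.

Lemma lincomb_ext a p b q a' b' : a = a' -> b = b' -> lincomb a p b q = lincomb a' p b' q.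
Proof. intros -> ->; reflexivity. Qed.

Lemma lincomb_same a b p : lincomb a p b p = lincomb (a+b) p 0 p.
Proof. destruct p as [[? ?] ?]; simpl; f_equal; [f_equal|]; ring. Qed.

Lemma lincomb_10 p q : lincomb 1 p 0 q = p.
Proof. destruct p as [[? ?] ?], q as [[? ?] ?]; simpl; f_equal; [f_equal|]; ring. Qed.

Lemma lincomb_01 p q : lincomb 0 p 1 q = q.
Proof. destruct p as [[? ?] ?], q as [[? ?] ?]; simpl; f_equal; [f_equal|]; ring. Qed.

Lemma hd_facts p q : H2 p -> H2 q ->
  0 <= hdist p q /\ cosh (hdist p q) = lor p q /\ (hdist p q = 0 -> p = q).
Proof.
  intros hp hq. pose proof (lor_ge1 p q hp hq) as h. unfold hdist.
  split; [apply arc_nonneg; auto|split; [apply cosh_arc; auto|]].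
  intro e. apply lor_eq1; auto. apply arc_zero; auto.
Qed.

Lemma geod_comb p q t : H2 p -> H2 q -> 0 <= t <= 1 ->
  exists a b, 0 <= a /\ 0 <= b /\ a*a + b*b + 2*a*b*lor p q = 1 /\
  geodH2 p q t = lincomb a p b q.
Proof.
  intros hp hq ht. destruct (hd_facts p q hp hq) as [d0 [dc dz]].
  unfold geodH2. destruct (Req_EM_T (hdist p q) 0) as [e|ne].
  - exists 1, 0. rewrite lincomb_10. repeat split; lra.
  - set (d := hdist p q) in *.
    assert (dp : 0 < d) by lra. pose proof (sinh_pos d dp) as sd.
    exists (sinh ((1-t)*d) / sinh d), (sinh (t*d) / sinh d).
    assert (0 <= sinh ((1-t)*d)) by (apply sinh_nonneg; nra).
    assert (0 <= sinh (t*d)) by (apply sinh_nonneg; nra).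
    repeat split.
    + unfold Rdiv; apply Rmult_le_pos; [lra| left; apply Rinv_0_lt_compat; lra].
    + unfold Rdiv; apply Rmult_le_pos; [lra| left; apply Rinv_0_lt_compat; lra].
    + rewrite <- dc. pose proof (sinh_id ((1-t)*d) (t*d)) as I.
      replace ((1-t)*d + t*d) with d in I by ring.
      apply (Rmult_eq_reg_r (sinh d * sinh d)). 2: nra.
      rewrite Rmult_1_l. set (D := sinh d) in *. set (A := sinh ((1-t)*d)) in *.
      set (B := sinh (t*d)) in *. set (C := cosh d) in *. transitivity (A*A+B*B+2*A*B*C); [field; lra | exact I].
Qed.

Lemma geod_0 p q : H2 p -> H2 q -> geodH2 p q 0 = p.
Proof.
  intros hp hq. unfold geodH2. destruct (Req_EM_T (hdist p q) 0) as [e|ne]; auto.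
  rewrite Rminus_0_r, Rmult_1_l, Rmult_0_l, sinh_0.
  replace (sinh (hdist p q) / sinh (hdist p q)) with 1. replace (0 / sinh (hdist p q)) with 0.
  apply lincomb_10. unfold Rdiv; ring.
  destruct (hd_facts p q hp hq) as [d0 _]. pose proof (sinh_pos (hdist p q)). field. lra.
Qed.

Lemma geod_1 p q : H2 p -> H2 q -> geodH2 p q 1 = q.
Proof.
  intros hp hq. destruct (hd_facts p q hp hq) as [d0 [_ dz]].
  unfold geodH2. destruct (Req_EM_T (hdist p q) 0) as [e|ne]; auto.
  rewrite Rminus_diag, Rmult_1_l, Rmult_0_l, sinh_0.
  replace (sinh (hdist p q) / sinh (hdist p q)) with 1. replace (0 / sinh (hdist p q)) with 0.
  apply lincomb_01. unfold Rdiv; ring.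
  pose proof (sinh_pos (hdist p q)). field. lra.
Qed.

Lemma comb_seg p q a b : H2 p -> H2 q -> 0 <= a -> 0 <= b ->
  a*a + b*b + 2*a*b*lor p q = 1 -> seg geodH2 p q (lincomb a p b q).
Proof.
  intros hp hq ha hb e. pose proof (lor_ge1 p q hp hq) as hc.
  destruct (hd_facts p q hp hq) as [d0 [dc dz]].
  destruct (Req_dec (hdist p q) 0) as [z|nz].
  - specialize (dz z). subst q. rewrite lor_self in e by auto.
    assert (a + b = 1) by nra.
    exists 0. split. lra. rewrite geod_0 by auto. rewrite lincomb_same, H, lincomb_10. reflexivity.
  - set (d := hdist p q) in *.
    assert (dp : 0 < d) by lra. pose proof (sinh_pos d dp) as sd.
    assert (0 <= a*b*lor p q) by (apply Rmult_le_pos; [apply Rmult_le_pos|]; lra).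
    assert (0 <= a*a) by nra.
    assert (b1 : b <= 1) by nra.
    set (r := arcsinh (b * sinh d)).
    assert (r0 : 0 <= r).
    { destruct (Rle_or_lt 0 r) as [h|h]; auto. apply sinh_lt in h. unfold r in h.
      rewrite sinh_arcsinh, sinh_0 in h. nra. }
    assert (r1 : r <= d).
    { destruct (Rle_or_lt r d) as [h|h]; auto. apply sinh_lt in h. unfold r in h.
      rewrite sinh_arcsinh in h. nra. }
    exists (r / d). split. split; [apply Rmult_le_pos; [lra| left; apply Rinv_0_lt_compat; lra]|].
    { apply (Rmult_le_reg_r d); auto. unfold Rdiv. rewrite Rmult_assoc, Rinv_l; lra. }
    unfold geodH2. fold d. destruct (Req_EM_T d 0) as [z|_]; [lra|].
    replace (r / d * d) with r by (field; lra).
    assert (Sr : sinh r = b * sinh d) by apply sinh_arcsinh.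
    rewrite Sr. replace (b * sinh d / sinh d) with b by (field; lra).
    set (a' := sinh ((1 - r/d) * d) / sinh d).
    assert (a'0 : 0 <= a').
    { unfold a'. unfold Rdiv. apply Rmult_le_pos; [| left; apply Rinv_0_lt_compat; lra].
      apply sinh_nonneg. replace ((1 - r * / d) * d) with (d - r) by (field; lra). lra. }
    assert (ea' : a'*a' + b*b + 2*a'*b*lor p q = 1).
    { unfold a'. rewrite <- dc. pose proof (sinh_id ((1-r/d)*d) r) as I.
      replace ((1-r/d)*d + r) with d in I by (field; lra). rewrite Sr in I.
      apply (Rmult_eq_reg_r (sinh d * sinh d)). 2: nra.
      rewrite Rmult_1_l. set (D := sinh d) in *. set (A := sinh ((1-r/d)*d)) in *.
      set (C := cosh d) in *.
      transitivity (A*A+b*D*(b*D)+2*A*(b*D)*C); [field; lra | exact I]. }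
    f_equal.
    assert (E : (a' - a) * (a' + a + 2*b*lor p q) = 0) by (ring_simplify; nra).
    apply Rmult_integral in E. destruct E as [E|E]. lra.
    assert (a' = 0) by nra. assert (a = 0) by nra. lra.
Qed.

Lemma geod_mid p q : H2 p -> H2 q -> exists k, 0 < k /\ geodH2 p q (1/2) = lincomb k p k q.
Proof.
  intros hp hq. destruct (hd_facts p q hp hq) as [d0 [dc dz]].
  unfold geodH2. destruct (Req_EM_T (hdist p q) 0) as [z|nz].
  - specialize (dz z). subst q. exists (1/2). split. lra.
    rewrite lincomb_same. replace (1/2+1/2) with 1 by field. symmetry; apply lincomb_10.
  - set (d := hdist p q) in *. assert (dp : 0 < d) by lra.
    exists (sinh (1/2*d) / sinh d). replace (1 - 1/2) with (1/2) by field. split; auto.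
    pose proof (sinh_pos d dp). pose proof (sinh_pos (1/2*d)).
    unfold Rdiv at 1. apply Rmult_lt_0_compat. apply H0; lra. apply Rinv_0_lt_compat; lra.
Qed.

Lemma seg_comb p q x : H2 p -> H2 q -> seg geodH2 p q x ->
  exists a b, 0 <= a /\ 0 <= b /\ x = lincomb a p b q /\ H2 x.
Proof.
  intros hp hq [t [ht ->]]. destruct (geod_comb p q t hp hq ht) as [a [b [ha [hb [e E]]]]].
  exists a, b. rewrite E. repeat split; auto. apply H2_comb; auto.
Qed.

Lemma H2_seg p q a b : H2 p -> H2 q -> 0 <= a -> 0 <= b -> H2 (lincomb a p b q) ->
  seg geodH2 p q (lincomb a p b q).
Proof.
  intros hp hq ha hb h. apply comb_seg; auto. rewrite <- lor_comb by auto. apply lor_self; auto.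
Qed.

Definition comb3 (l : R) (x0 : pt3) (a : R) (p : pt3) (b : R) (q : pt3) : pt3 :=
  let '(x1,y1,z1) := x0 in let '(x2, y2, z2) := p in let '(x3,y3,z3) := q in
   (l*x1 + a*x2 + b*x3, l*y1+a*y2+b*y3, l*z1+a*z2+b*z3).

Lemma lc_comp a a1 x0 b1 y1 b a2 b2 y2 :
  lincomb a (lincomb a1 x0 b1 y1) b (lincomb a2 x0 b2 y2) =
  comb3 (a*a1+b*a2) x0 (a*b1) y1 (b*b2) y2.
Proof. destruct y1 as [[? ?] ?], y2 as [[? ?] ?], x0 as [[? ?] ?]; simpl; f_equal; [f_equal|]; ring. Qed.

Lemma comb3_00 l x0 p q k : comb3 l x0 0 p 0 q = lincomb l x0 0 k.
Proof. destruct p as [[? ?] ?], q as [[? ?] ?], x0 as [[? ?] ?], k as [[? ?] ?]; simpl; f_equal; [f_equal|]; ring. Qed.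

Lemma comb3_r l x0 a p b q r : r <> 0 ->
  comb3 l x0 a p b q = lincomb l x0 r (lincomb (a/r) p (b/r) q).
Proof. intro. destruct p as [[? ?] ?], q as [[? ?] ?], x0 as [[? ?] ?]; simpl; f_equal; [f_equal|]; field; auto. Qed.

Lemma part1 : drop_complete H2 geodH2.
Proof.
  intros K x0 [KM Kc] [k Kk] hx0 x. split.
  - intro hc. apply hc.
    + split.
      * intros y [w [Kw sw]]. destruct (seg_comb _ _ _ hx0 (KM _ Kw) sw) as [? [? [? [? [? ?]]]]]; auto.
      * intros u v y [y1 [K1 s1]] [y2 [K2 s2]] suv.
        pose proof (KM _ K1) as h1. pose proof (KM _ K2) as h2.
        destruct (seg_comb _ _ _ hx0 h1 s1) as [a1 [b1 [ha1 [hb1 [E1 hu]]]]].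
        destruct (seg_comb _ _ _ hx0 h2 s2) as [a2 [b2 [ha2 [hb2 [E2 hv]]]]].
        destruct (seg_comb _ _ _ hu hv suv) as [a [b [ha [hb [E hy]]]]].
        set (l := a*a1 + b*a2). set (m := a*b1). set (n := b*b2).
        assert (l0 : 0 <= l) by (unfold l; nra). assert (0 <= m) by (unfold m; nra).
        assert (0 <= n) by (unfold n; nra).
        destruct (Req_dec (m+n) 0) as [z|nz].
        -- assert (Ey : y = lincomb l x0 0 k).
           { rewrite E, E1, E2, lc_comp. fold l m n.
             assert (m0 : m = 0) by lra. assert (n0 : n = 0) by lra. rewrite m0, n0. apply comb3_00. }
           exists k. split; auto. rewrite Ey in *. apply H2_seg; auto. lra.
        -- set (w' := lincomb m y1 n y2).
           assert (c12 : 1 <= lor y1 y2) by (apply lor_ge1; auto).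
           set (r2 := m*m + n*n + 2*m*n*lor y1 y2).
           assert (r2p : 0 < r2).
           { unfold r2. assert (0 <= m*n*lor y1 y2) by (apply Rmult_le_pos; [apply Rmult_le_pos|]; lra).
             assert (0 < m \/ 0 < n) by lra. destruct H2; nra. }
           set (r := sqrt r2). assert (rp : 0 < r) by (apply sqrt_lt_R0; auto).
           assert (rr : r * r = r2) by (apply sqrt_sqrt; lra).
           set (w := lincomb (m/r) y1 (n/r) y2).
           assert (Hw : seg geodH2 y1 y2 w).
           { apply comb_seg; auto. 1,2: unfold Rdiv; apply Rmult_le_pos; [lra|left; apply Rinv_0_lt_compat; lra].
             apply (Rmult_eq_reg_r (r*r)). 2: nra. rewrite Rmult_1_l.
             transitivity r2; [|lra]. unfold r2. clearbody r. field. lra. }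
           assert (Kw : K w) by (apply (Kc y1 y2); auto).
           assert (Ey : y = lincomb l x0 r w).
           { rewrite E, E1, E2, lc_comp. fold l m n. apply comb3_r. lra. }
           exists w. split; auto. rewrite Ey in *. apply H2_seg; auto. lra.
    + intros h [->|Kh].
      * exists k. split; auto. exists 0. split. lra. symmetry. apply geod_0; auto.
      * exists h. split; auto. exists 1. split. lra. symmetry. apply geod_1; auto.
  - intros [y [Ky sy]] K' [_ K'c] sub. apply (K'c x0 y); auto.
Qed.

Lemma seg_convex a b u v x : H2 a -> H2 b -> seg geodH2 a b u -> seg geodH2 a b v ->
  seg geodH2 u v x -> seg geodH2 a b x.
Proof.
  intros ha hb su sv sx.
  destruct (seg_comb _ _ _ ha hb su) as [a1 [b1 [? [? [E1 hu]]]]].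
  destruct (seg_comb _ _ _ ha hb sv) as [a2 [b2 [? [? [E2 hv]]]]].
  destruct (seg_comb _ _ _ hu hv sx) as [al [be [? [? [E hx]]]]].
  assert (Ex : x = lincomb (al*a1+be*a2) a (al*b1+be*b2) b).
  { rewrite E, E1, E2. destruct a as [[? ?] ?], b as [[? ?] ?]; simpl; f_equal; [f_equal|]; ring. }
  rewrite Ex in *. apply H2_seg; auto; nra.
Qed.

Definition pp : pt3 := (0, 0, 1).
Definition pa : pt3 := (3/4, 0, 5/4).
Definition pb : pt3 := (0, 3/4, 5/4).

Lemma part2 : ~ drop_complete H2R geodH2R.
Proof.
  intro DC.
  assert (hp : H2 pp) by (unfold H2, pp; split; lra).
  assert (ha : H2 pa) by (unfold H2, pa; split; lra).
  assert (hb : H2 pb) by (unfold H2, pb; split; lra).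
  set (K := fun Y : pt3 * R => seg geodH2 pa pb (fst Y) /\ snd Y = 0).
  set (x0 := (pp, 1)).
  assert (Kc : convex H2R geodH2R K).
  { split.
    - intros [y s] [hy _]. unfold H2R; simpl in hy |- *.
      destruct (seg_comb _ _ _ ha hb hy) as [? [? [? [? [? ?]]]]]; auto.
    - intros [u su] [v sv] [x sx] [Ku eu] [Kv ev] [t [ht E]]. simpl in Ku, eu, Kv, ev |- *.
      unfold geodH2R in E; simpl in E. injection E as E1 E2. split; simpl.
      + subst x. apply (seg_convex pa pb u v); auto. exists t; auto.
      + subst. ring. }
  assert (Ka : K (pa, 0)).
  { split; simpl; auto. exists 0. split. lra. symmetry; apply geod_0; auto. }
  assert (Kb : K (pb, 0)).
  { split; simpl; auto. exists 1. split. lra. symmetry; apply geod_1; auto. }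
  set (P1 := geodH2R x0 (pa, 0) (1/2)).
  set (P2 := geodH2R x0 (pb, 0) (1/2)).
  set (X := geodH2R P1 P2 (1/2)).
  assert (CX : conv H2R geodH2R (fun y => y = x0 \/ K y) X).
  { intros K' [_ K'c] sub.
    assert (K' P1). { apply (K'c x0 (pa,0)); auto. exists (1/2). split; [lra|auto]. }
    assert (K' P2). { apply (K'c x0 (pb,0)); auto. exists (1/2). split; [lra|auto]. }
    apply (K'c P1 P2); auto. exists (1/2). split; [lra|auto]. }
  pose proof (proj1 (DC K x0 Kc (ex_intro _ _ Ka) hp X) CX) as CX'.
  destruct CX' as [[y s] [[sy s0] [t [ht E]]]]. simpl in sy, s0. subst s.
  destruct (geod_mid pp pa hp ha) as [k1 [k1p E1]].
  destruct (geod_mid pp pb hp hb) as [k2 [k2p E2]].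
  unfold X, P1, P2, x0, geodH2R in E. simpl in E. injection E as Ef Es.
  assert (t = 1/2) by lra. subst t.
  rewrite E1, E2 in Ef.
  destruct (seg_comb _ _ _ ha hb sy) as [al [be [hal [hbe [Ey hy]]]]].
  assert (hm1 : H2 (lincomb k1 pp k1 pa)) by (rewrite <- E1; destruct (seg_comb pp pa (geodH2 pp pa (1/2)) hp ha) as [? [? [? [? [? ?]]]]]; auto; exists (1/2); split; [lra|auto]).
  assert (hm2 : H2 (lincomb k2 pp k2 pb)) by (rewrite <- E2; destruct (seg_comb pp pb (geodH2 pp pb (1/2)) hp hb) as [? [? [? [? [? ?]]]]]; auto; exists (1/2); split; [lra|auto]).
  destruct (geod_mid _ _ hm1 hm2) as [k [kp Ek]].
  destruct (geod_mid pp y hp hy) as [c [cp Ec]].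
  rewrite Ek, Ec, Ey in Ef. rewrite Ey in hy.
  unfold pp, pa, pb in Ef, hy; simpl in Ef, hy. destruct hy as [hy _].
  injection Ef as ez ey ex.
  assert (ea : k*k1 = c*al) by lra.
  assert (eb : k*k2 = c*be) by lra.
  assert (esum : k*(k1+k2) = c) by lra.
  assert (s1 : al + be = 1).
  { apply (Rmult_eq_reg_l c); [|lra]. nra. }
  assert (al*be = 0) by nra.
  assert (0 < k*k1) by nra. assert (0 < k*k2) by nra.
  assert (0 < al) by nra. assert (0 < be) by nra. nra.
Qed.

Theorem theorem3 :
  drop_complete H2 geodH2 /\ ~ drop_complete H2R geodH2R.
Proof. split; [apply part1 | apply part2]. Qed.
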